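(* Let $\mu$ and $\pi$ be probability measures on a Polish space $\mathcal Y$ with metric $d$ of diameter $1$, and let $\mathcal D_\mu,\mathcal D_\pi\colon\mathcal Y\to[0,1]$. For $\rho>0$ set $$A_\rho=\{x\in\mathcal Y:\exists y\in\mathcal Y\text{ with }\mathcal D_\pi(y)>\mathcal D_\pi(x)+d(x,y)/\rho\},\qquad\bar A_\rho=\{x:d(x,A_\rho)\le\rho\}.$$ Assume $\delta,\varepsilon_1,\varepsilon_2$ satisfy $$\int\mathcal D_\pi\,d\pi\ge\delta,\quad\|\mu-\pi\|_d\le\varepsilon_1,\quad\sup_x|\mathcal D_\pi(x)-\mathcal D_\mu(x)|\le\varepsilon_2.$$ Define probability measures $\tilde\mu(A)=c_\mu\int_A\mathcal D_\mu\,d\mu$, $\tilde\pi(A)=c_\pi\int_A\mathcal D_\pi\,d\pi$ with normalising constants $c_\mu,c_\pi$. Then for every $\rho\le1$, $$\|\tilde\mu-\tilde\pi\|_d\le\frac1\delta\Bigl(\frac{3\varepsilon_1}\rho+\varepsilon_2+2\pi(\bar A_\rho)\Bigr).$$ In particular $\int\mathcal D_\mu\,d\mu>0$ whenever the right-hand side is strictly smaller than $1$.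
   Context: $\|\cdot\|_d$ denotes the Wasserstein-1 distance with respect to $d$: $\|\mu-\pi\|_d=\sup\{\int fd\mu-\int fd\pi: f\ \text{1-Lipschitz w.r.t. } d\}$. *)

(* Defs.v *)
From HB Require Import structures.
From mathcomp Require Import all_boot all_order all_algebra.
From mathcomp Require Import all_classical all_reals all_analysis.
Set Implicit Arguments. Unset Strict Implicit. Unset Printing Implicit Defensive.
Import Order.TTheory GRing.Theory Num.Theory.
Local Open Scope classical_set_scope.
Local Open Scope ring_scope.

Section Defs.
Context {R : realType} {T : Type}.
Variable d : T -> T -> R.

Definition is_metric : Prop :=
  [/\ forall x y, 0 <= d x y,
      forall x y, d x y = 0 <-> x = y,
      forall x y, d x y = d y x &
      forall x y z, d x z <= d x y + d y z].

Definition metric_separable : Prop :=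
  exists S : set T, countable S /\
    forall x (e : R), 0 < e -> exists2 s, S s & d x s < e.

Definition metric_complete : Prop :=
  forall u : nat -> T,
    (forall e : R, 0 < e -> exists N, forall m n, (N <= m)%N -> (N <= n)%N -> d (u m) (u n) < e) ->
    exists l, forall e : R, 0 < e -> exists N, forall n, (N <= n)%N -> d (u n) l < e.

Definition polish_metric : Prop :=
  [/\ is_metric, metric_separable & metric_complete].

Definition diameter_one : Prop :=
  (forall x y, d x y <= 1) /\
  (forall e : R, 0 < e -> exists x y, 1 - e < d x y).

Definition metric_open (U : set T) : Prop :=
  forall x, U x -> exists2 r : R, 0 < r & forall y, d x y < r -> U y.

(* distance from a point to a set (+oo for the empty set) *)
Definition dist_set (x : T) (A : set T) : \bar R :=
  ereal_inf [set (d x a)%:E | a in A].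

Definition lip1 (f : T -> R) : Prop := forall x y, `|f x - f y| <= d x y.
End Defs.

Definition wass {R : realType} {dsp} {T : measurableType dsp} (d : T -> T -> R)
  (m1 m2 : set T -> \bar R) : \bar R :=
  ereal_sup [set (\int[m1]_x (f x)%:E - \int[m2]_x (f x)%:E)%E | f in lip1 d].

Definition reweight {R : realType} {dsp} {T : measurableType dsp}
  (mu : set T -> \bar R) (D : T -> R) : set T -> \bar R :=
  fun A => ((fine (\int[mu]_x (D x)%:E))^-1%:E * \int[mu]_(x in A) (D x)%:E)%E.

Definition A_rho {R : realType} {T : Type} (d : T -> T -> R) (Dpi : T -> R) (rho : R) : set T :=
  [set x | exists y, Dpi y > Dpi x + d x y / rho].

Definition Abar_rho {R : realType} {T : Type} (d : T -> T -> R) (Dpi : T -> R) (rho : R) : set T :=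
  [set x | (dist_set d x (A_rho d Dpi rho) <= rho%:E)%E].

(* Main.v *)
Require Import Defs.
From HB Require Import structures.
From mathcomp Require Import all_boot all_order all_algebra.
From mathcomp Require Import all_classical all_reals all_analysis.
From mathcomp Require Import measurable_realfun.
From mathcomp Require Import ring lra.
Import Order.TTheory GRing.Theory Num.Theory.
Local Open Scope classical_set_scope.
Local Open Scope ring_scope.
Section Meas.
Context {R : realType} {dsp : measure_display} {T : measurableType dsp}.
Variable d : T -> T -> R.
Hypothesis hborel : @measurable _ T = <<s metric_open d >>.

Lemma lip_measurable (h : T -> R) (K : R) : 0 < K ->
  (forall x y, `|h x - h y| <= K * d x y) -> measurable_fun setT h.
Proof.
move=> K0 hL.
apply: (measurability _ (RGenOInfty.measurableE R)).
move=> _ [_ [a ->] <-].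
rewrite setTI hborel; apply: sub_sigma_algebra => x /= hx.
exists ((h x - a) / K); first by rewrite divr_gt0 // subr_gt0; move: hx; rewrite in_itv /= andbT.
move=> y dxy; rewrite /= in_itv /= andbT.
have : `|h x - h y| < h x - a.
  by apply: (le_lt_trans (hL x y)); rewrite -ltr_pdivlMl // mulrC.
rewrite ltr_norml => /andP[_]; lra.
Qed.
End Meas.
Section Supf.
Context {R : realType} {T : Type}.
Variable d : T -> T -> R.
Hypothesis hd : is_metric d.
Variable r : R.
Hypothesis r0 : 0 < r.
Variable phi : T -> R.
Hypothesis phi01 : forall x, 0 <= phi x <= 1.

Definition supf x := sup (range (fun y => phi y - d x y / r)).

Let d0 x y : 0 <= d x y. Proof. by case: hd. Qed.
Let dxx x : d x x = 0. Proof. by case: hd => _ h _ _; apply/h. Qed.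
Let dsym x y : d x y = d y x. Proof. by case: hd. Qed.
Let dtri x y z : d x z <= d x y + d y z. Proof. by case: hd. Qed.

Let hub x : has_ubound (range (fun y => phi y - d x y / r)).
Proof.
exists 1 => _ [y _ <-]; have := phi01 y; have : 0 <= d x y / r by rewrite divr_ge0 // ltW.
move=> h /andP[_ h1]; lra.
Qed.

Lemma supf_ub x y : phi y - d x y / r <= supf x.
Proof. by apply: (ub_le_sup (hub x)); exists y. Qed.

Lemma supf_le x b : (forall y, phi y - d x y / r <= b) -> supf x <= b.
Proof. by move=> h; apply: ge_sup; [exists (phi x - d x x / r); exists x|move=> _ [y _ <-]]. Qed.

Lemma supf_ge x : phi x <= supf x.
Proof. by have := supf_ub x x; rewrite dxx mul0r subr0. Qed.

Lemma supf_le1 x : supf x <= 1.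
Proof.
apply: supf_le => y; have := phi01 y; have : 0 <= d x y / r by rewrite divr_ge0 // ltW.
move=> h /andP[_ h1]; lra. Qed.

Lemma supf_ge0 x : 0 <= supf x.
Proof. by apply: le_trans (supf_ge x); case/andP: (phi01 x). Qed.

Lemma supf_lip x x' : supf x <= supf x' + d x x' / r.
Proof.
apply: supf_le => y.
have h1 := supf_ub x' y.
have h2 : d x' y / r <= d x y / r + d x x' / r.
  rewrite -mulrDl ler_pM2r ?invr_gt0 //; apply: le_trans (dtri x' x y) _; by rewrite (dsym x' x) addrC.
lra.
Qed.

Lemma supf_lipn x x' : `|supf x - supf x'| <= d x x' / r.
Proof.
rewrite ler_norml; have := supf_lip x x'; have := supf_lip x' x; rewrite (dsym x').
move=> h1 h2; apply/andP; split; lra.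
Qed.
End Supf.
Section Bnd.
Context {R : realType} {dsp : measure_display} {T : measurableType dsp}.
Local Open Scope ereal_scope.

Lemma bnd_integrable (m : {finite_measure set T -> \bar R}) (f : T -> R) (M : R) :
  measurable_fun setT f -> (forall x, (`|f x| <= M)%R) -> m.-integrable setT (EFin \o f).
Proof.
move=> mf hM; apply/integrableP; split; first exact/measurable_EFinP.
apply: (@le_lt_trans _ _ (`|M|%:E * m setT)).
  apply: integral_le_bound => //.
  - by apply/measurableT_comp => //; exact/measurable_EFinP.
  - by apply: aeW => x _ /=; rewrite lee_fin (le_trans (hM x)) // ler_norm.
by rewrite -ge0_fin_numE ?mule_ge0 // fin_numM // fin_num_measure.
Qed.
End Bnd.

Section Reweight.
Context {R : realType} {dsp : measure_display} {T : measurableType dsp}.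
Variable mu : probability T R.
Variable D : T -> R.
Hypothesis hD01 : forall x, (0 <= D x <= 1)%R.
Hypothesis hDm : measurable_fun setT D.
Local Open Scope ereal_scope.

Definition dens (A : set T) := \int[mu]_(x in A) (D x)%:E.

Let Dint : mu.-integrable setT (EFin \o D).
Proof.
apply: (@bnd_integrable _ _ _ _ _ 1%R) => // x.
by have /andP[h1 h2] := hD01 x; rewrite ger0_norm.
Qed.

Let dens0 : dens set0 = 0. Proof. by rewrite /dens integral_set0. Qed.
Let dens_ge0 A : 0 <= dens A.
Proof. by apply: integral_ge0 => x _; rewrite lee_fin; case/andP: (hD01 x). Qed.
Let dens_sa : semi_sigma_additive dens.
Proof.
move=> /= A mA tA mUA.
rewrite /dens integral_bigcup //; last by apply: integrableS Dint.
apply: is_cvg_ereal_nneg_natsum_cond => n _ _.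
by apply: integral_ge0 => x _; rewrite lee_fin; case/andP: (hD01 x).
Qed.
HB.instance Definition _ := isMeasure.Build _ _ _ dens dens0 dens_ge0 dens_sa.

Let dens_fin : fin_num_fun dens.
Proof.
move=> A mA; rewrite /dens; apply: integrable_fin_num => //.
by apply: integrableS Dint.
Qed.
HB.instance Definition _ := @Measure_isFinite.Build _ T _ dens dens_fin.


Definition Zc : R := fine (\int[mu]_x (D x)%:E).
Let Zc_ge0 : (0 <= Zc)%R.
Proof. by rewrite fine_ge0 // integral_ge0 // => x _; rewrite lee_fin; case/andP: (hD01 x). Qed.
Let cc_ge0 : (0 <= Zc^-1)%R. Proof. by rewrite invr_ge0. Qed.
Definition cc : {nonneg R} := NngNum cc_ge0.

Lemma reweightE : reweight mu D = mscale cc dens.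
Proof. by []. Qed.

Let numu : mscale cc dens `<< mu.
Proof.
apply/null_content_dominatesP => A mA muA0.
rewrite /mscale /= /dens null_set_integral ?mule0 //.
by apply/measurable_EFinP; apply: measurable_funTS.
Qed.

Lemma integral_reweight (f : T -> R) (M : R) : measurable_fun setT f ->
  (forall x, (`|f x| <= M)%R) ->
  \int[reweight mu D]_x (f x)%:E = \int[mu]_x ((f x * (cc%:num * D x))%:E).
Proof.
move=> mf hM; rewrite reweightE.
rewrite -(Radon_Nikodym_change_of_variables numu) //; last first.
  exact: (@bnd_integrable _ _ _ (mscale cc dens) _ _ mf hM).
apply: ae_eq_integral => //.
- apply: emeasurable_funM; first exact/measurable_EFinP.
  by apply: measurable_int; exact: Radon_Nikodym_integrable.
- apply/measurable_EFinP; apply: measurable_funM => //.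
  exact: measurable_funM.
- have -> : (fun x => (f x * (cc%:num * D x))%:E) = (fun x => (f x)%:E * (cc%:num * D x)%:E).
    by apply/funext => x; rewrite EFinM.
  apply: ae_eqe_mul2l.
  apply: integral_ae_eq => //.
  + exact: Radon_Nikodym_integrable.
  + apply/measurable_EFinP; exact: measurable_funM.
  + move=> E _ mE.
    rewrite -Radon_Nikodym_integral //= /mscale /dens.
    under eq_integral do rewrite EFinM.
    rewrite integralZl //.
    by apply: integrableS Dint.
Qed.
End Reweight.
Section RI.
Context {R : realType} {dsp : measure_display} {T : measurableType dsp}.
Variable m : probability T R.

Definition bm (h : T -> R) := measurable_fun setT h /\ exists M, forall x, `|h x| <= M.
Definition RI (h : T -> R) := Rintegral m setT h.

Lemma bm_int h : bm h -> m.-integrable setT (EFin \o h).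
Proof. by case=> mh [M hM]; exact: (@bnd_integrable _ _ _ m _ M mh hM). Qed.

Lemma bm_cst k : bm (fun _ => k).
Proof. by split => //; exists `|k|. Qed.

Lemma bmD h1 h2 : bm h1 -> bm h2 -> bm (fun x => h1 x + h2 x).
Proof.
move=> [m1 [M1 h1M]] [m2 [M2 h2M]]; split; first exact: measurable_funD.
by exists (M1 + M2) => x; apply: le_trans (ler_normD _ _) _; apply: lerD.
Qed.

Lemma bmM h1 h2 : bm h1 -> bm h2 -> bm (fun x => h1 x * h2 x).
Proof.
move=> [m1 [M1 h1M]] [m2 [M2 h2M]]; split; first exact: measurable_funM.
exists (M1 * M2) => x; rewrite normrM; apply: ler_pM => //.
Qed.

Lemma bmN h : bm h -> bm (fun x => - h x).
Proof.
move=> [m1 [M1 h1M]]; split; first exact: measurable_funN.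
by exists M1 => x; rewrite normrN.
Qed.

Lemma bmB h1 h2 : bm h1 -> bm h2 -> bm (fun x => h1 x - h2 x).
Proof. by move=> b1 b2; apply: bmD => //; apply: bmN. Qed.

Lemma RI_E h : bm h -> (\int[m]_x (h x)%:E)%E = (RI h)%:E.
Proof. by move=> bh; rewrite /RI /Rintegral fineK //; apply: integrable_fin_num => //; apply: bm_int. Qed.

Lemma RI_D h1 h2 : bm h1 -> bm h2 -> RI (fun x => h1 x + h2 x) = RI h1 + RI h2.
Proof. by move=> b1 b2; apply: RintegralD => //; apply: bm_int. Qed.

Lemma RI_B h1 h2 : bm h1 -> bm h2 -> RI (fun x => h1 x - h2 x) = RI h1 - RI h2.
Proof. by move=> b1 b2; apply: RintegralB => //; apply: bm_int. Qed.

Lemma RI_Z k h : bm h -> RI (fun x => k * h x) = k * RI h.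
Proof. by move=> b; apply: RintegralZl => //; apply: bm_int. Qed.

Lemma RI_le h1 h2 : bm h1 -> bm h2 -> (forall x, h1 x <= h2 x) -> RI h1 <= RI h2.
Proof. by move=> b1 b2 h; apply: le_Rintegral => //; apply: bm_int. Qed.

Lemma RI_cst k : RI (fun _ => k) = k.
Proof.
rewrite /RI Rintegral_cst //; have h := probability_setT m.
rewrite [fine _](_ : _ = 1) ?mulr1 //.
by rewrite -[X in _ = X]/(fine 1%E); congr fine; exact: h. Qed.

Lemma RI_ext h1 h2 : (forall x, h1 x = h2 x) -> RI h1 = RI h2.
Proof. by move=> h; congr RI; apply/funext. Qed.
End RI.

Arguments bmM {R dsp T} [h1 h2].
Arguments bmD {R dsp T} [h1 h2].
Arguments bmB {R dsp T} [h1 h2].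
Arguments bmN {R dsp T} [h].
Section Main.
Context {R : realType} {dsp : measure_display} {T : measurableType dsp}.
Variable d : T -> T -> R.
Hypothesis hmet : is_metric d.
Hypothesis hborel : @measurable _ T = <<s metric_open d >>.
Hypothesis hd1 : forall x y, d x y <= 1.
Variable x0 : T.
Variables mu pi : probability T R.
Variables Dmu Dpi : T -> R.
Hypotheses (hDmu01 : forall x, 0 <= Dmu x <= 1) (hDpi01 : forall x, 0 <= Dpi x <= 1).
Hypotheses (hDmu_meas : measurable_fun setT Dmu) (hDpi_meas : measurable_fun setT Dpi).
Variables delta eps1 eps2 : R.
Hypothesis hdelta : 0 < delta.
Hypothesis hint : (delta%:E <= \int[pi]_x (Dpi x)%:E)%E.
Hypothesis hW : (wass d mu pi <= eps1%:E)%E.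
Hypothesis hsup : forall x, `|Dpi x - Dmu x| <= eps2.
Variable rho : R.
Hypotheses (hrho0 : 0 < rho) (hrho1 : rho <= 1).

Let d0 x y : 0 <= d x y. Proof. by case: hmet. Qed.
Let dxx x : d x x = 0. Proof. by case: hmet => _ h _ _; apply/h. Qed.
Let dsym x y : d x y = d y x. Proof. by case: hmet. Qed.
Let dtri x y z : d x z <= d x y + d y z. Proof. by case: hmet. Qed.

Lemma bm_lip (h : T -> R) (K : R) : 0 < K ->
  (forall x y, `|h x - h y| <= K * d x y) -> bm h.
Proof.
move=> K0 hL; split; first exact: (@lip_measurable _ _ _ d hborel h K K0 hL).
exists (`|h x0| + K) => x.
have : `|h x - h x0| <= K by apply: le_trans (hL x x0) _; rewrite ler_piMr // ltW.
move=> h1; have := ler_normD (h x - h x0) (h x0); rewrite subrK; lra.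
Qed.

Lemma lip1_bm h : lip1 d h -> bm h.
Proof. by move=> hl; apply: (@bm_lip h 1) => // x y; rewrite mul1r; exact: hl. Qed.

Lemma Wb h : lip1 d h -> RI mu h - RI pi h <= eps1.
Proof.
move=> hl; rewrite -lee_fin; apply: le_trans hW.
rewrite EFinB -(@RI_E _ _ _ mu h (lip1_bm h hl)) -(@RI_E _ _ _ pi h (lip1_bm h hl)).
by apply: ereal_sup_ubound; exists h.
Qed.

Lemma eps1_ge0 : 0 <= eps1.
Proof.
have := @Wb (fun _ => 0) ltac:(by move=> x y; rewrite subr0 normr0).
by rewrite !RI_cst subr0.
Qed.

Lemma eps2_ge0 : 0 <= eps2.
Proof. exact: le_trans (hsup x0). Qed.

Let A := A_rho d Dpi rho.
Let Ab := Abar_rho d Dpi rho.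
Let G := supf d rho Dpi.
Let phiA := fun y => \1_A y : R.
Let S := supf d rho phiA.

Let phiA01 x : 0 <= phiA x <= 1.
Proof. by rewrite /phiA indicE; case: (x \in A); rewrite /= ?ler01 ?lexx. Qed.

Lemma G_bm : bm G.
Proof.
apply: (@bm_lip G rho^-1); first by rewrite invr_gt0.
by move=> x y; rewrite mulrC; exact: supf_lipn.
Qed.

Lemma S_bm : bm S.
Proof.
apply: (@bm_lip S rho^-1); first by rewrite invr_gt0.
by move=> x y; rewrite mulrC; exact: supf_lipn.
Qed.

Lemma G_off x : ~ A x -> G x = Dpi x.
Proof.
move=> nA; apply/eqP; rewrite eq_le supf_ge // andbT.
apply: supf_le => // y; rewrite lerBlDr; rewrite leNgt; apply/negP => hy.
by apply: nA; exists y.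
Qed.

Lemma G01 x : 0 <= G x - Dpi x <= 1.
Proof.
have h1 := @supf_ge R T d hmet rho hrho0 Dpi hDpi01 x.
have h2 := @supf_le1 R T d hmet rho hrho0 Dpi hDpi01 x.
have := hDpi01 x; rewrite /G; move=> /andP[? ?]; apply/andP; split; lra.
Qed.

Lemma S_A x : A x -> S x = 1.
Proof.
move=> Ax; apply/eqP; rewrite eq_le supf_le1 //=.
have := @supf_ge R T d hmet rho hrho0 phiA phiA01 x.
by rewrite /phiA indicE mem_set.
Qed.

Lemma S_ge0 x : 0 <= S x.
Proof. exact: supf_ge0. Qed.

Lemma S_Ab x : S x <= \1_Ab x.
Proof.
rewrite indicE; case: (boolP (x \in Ab)) => [_|/negP xAb].
  exact: supf_le1.
apply: supf_le => // y; rewrite /phiA indicE.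
case: (boolP (y \in A)) => [/set_mem Ay|_]; last first.
  by rewrite sub0r oppr_le0 divr_ge0 // ltW.
rewrite subr_le0 ler_pdivlMr // mul1r.
have : (rho%:E < dist_set d x A)%E.
  by rewrite ltNge; apply/negP => h; apply: xAb; rewrite inE.
move=> h; rewrite -lee_fin; apply: ltW; apply: (lt_le_trans h).
by apply: ereal_inf_lbound; exists y.
Qed.

Lemma Ab_meas : measurable Ab.
Proof.
suff : <<s metric_open d >> (~` Ab) by rewrite -hborel => /measurableC; rewrite setCK.
apply: sub_sigma_algebra => x /= nAb.
have lt : (rho%:E < dist_set d x A)%E.
  by rewrite ltNge; apply/negP => h; apply: nAb.
have [e e0 he] : exists2 e, 0 < e & ((rho + 2 * e)%:E <= dist_set d x A)%E.
  move: lt; case: (dist_set d x A) => [r| |] //=.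
  - rewrite lte_fin => hr; exists ((r - rho) / 2); first by rewrite divr_gt0 // subr_gt0.
    rewrite lee_fin; lra.
  - by move=> _; exists 1 => //; rewrite leey.
exists e => // y dxy nAby; move: nAby; rewrite /Ab /Abar_rho /=.
apply/negP; rewrite -ltNge.
apply: (@lt_le_trans _ _ (rho + e)%:E); first by rewrite lte_fin; lra.
apply/ereal_infP => _ [a Aa <-]; rewrite lee_fin.
have : ((rho + 2 * e)%:E <= (d x a)%:E)%E.
  by apply: le_trans he _; apply: ereal_inf_lbound; exists a.
rewrite lee_fin => h1; have := dtri x y a; lra.
Qed.

Definition P := fine (pi Ab).

Lemma piAb : pi Ab = P%:E.
Proof. by rewrite /P fineK // fin_num_measure //; exact: Ab_meas. Qed.

Lemma RI_Ab : RI pi (fun x => \1_Ab x) = P.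
Proof.
by rewrite /RI /Rintegral integral_indic //; [rewrite setIT|exact: Ab_meas].
Qed.

Lemma bm_Ab : bm (fun x => \1_Ab x : R).
Proof.
split; first by apply: measurable_indic; exact: Ab_meas.
by exists 1 => x; rewrite indicE; case: (x \in Ab); rewrite /= ?normr1 ?normr0 ?ler01.
Qed.

Lemma P_ge0 : 0 <= P.
Proof. by rewrite /P fine_ge0. Qed.

Lemma bm_Dmu : bm Dmu.
Proof. by split => //; exists 1 => x; have /andP[? ?] := hDmu01 x; rewrite ger0_norm. Qed.
Lemma bm_Dpi : bm Dpi.
Proof. by split => //; exists 1 => x; have /andP[? ?] := hDpi01 x; rewrite ger0_norm. Qed.

Section Fix.
Variable f : T -> R.
Hypothesis hf : lip1 d f.
Let bf : bm f := lip1_bm f hf.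
Let Zm := RI mu Dmu.
Let Zp := RI pi Dpi.
Hypothesis hZm : 0 < Zm.
Let hZp : delta <= Zp.
Proof. by rewrite -lee_fin /Zp -(RI_E pi Dpi bm_Dpi). Qed.
Let Ff := RI mu (fun x => f x * Dmu x).
Let Fp := RI pi (fun x => f x * Dpi x).
Let a := Ff / Zm.
Let b := Fp / Zp.
Let g := fun x => a - f x.
Let bg : bm g. Proof. exact: bmB (bm_cst _) bf. Qed.

Let g1 x : `|g x| <= 1.
Proof.
have E : RI mu (fun y => (f y - f x) * Dmu y) = Ff - f x * Zm.
  rewrite /Zm -RI_Z; last exact: bm_Dmu.
  rewrite /Ff -RI_B; [|exact: bmM bf bm_Dmu|exact: bmM (bm_cst _) bm_Dmu].
  by apply: RI_ext => y; rewrite mulrBl.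
have : `|Ff - f x * Zm| <= Zm.
  rewrite -E ler_norml; apply/andP; split.
    have -> : - Zm = RI mu (fun y => -1 * Dmu y) by rewrite RI_Z ?mulN1r //; exact: bm_Dmu.
    apply: RI_le; [exact: bmM (bm_cst _) bm_Dmu|exact: bmM (bmB bf (bm_cst _)) bm_Dmu|].
    move=> y; have /andP[h0 h1] := hDmu01 y; have := hf y x; have := hd1 y x.
    rewrite ler_norml => h2 /andP[h3 h4]; nra.
  apply: RI_le; [exact: bmM (bmB bf (bm_cst _)) bm_Dmu|exact: bm_Dmu|].
  move=> y; have /andP[h0 h1] := hDmu01 y; have := hf y x; have := hd1 y x.
  rewrite ler_norml => h2 /andP[h3 h4]; nra.
have -> : g x = (Ff - f x * Zm) / Zm by rewrite /g /a mulrBl mulfK // gt_eqF.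
by move=> h; rewrite normrM normfV (gtr0_norm hZm) ler_pdivrMr // mul1r.
Qed.

Lemma main_real : a - b <= delta^-1 * (3 * eps1 / rho + eps2 + 2 * P).
Proof.
have bG := G_bm; have bS := S_bm.
have hZp0 : 0 < Zp by apply: lt_le_trans hZp.
have bgG : bm (fun x => g x * G x) by exact: bmM bg bG.
have bk : bm (fun x => g x * (Dpi x - G x)) by exact: bmM bg (bmB bm_Dpi bG).
have bk3 : bm (fun x => g x * (Dpi x - Dmu x)) by exact: bmM bg (bmB bm_Dpi bm_Dmu).
have K1 : RI mu (fun x => g x * Dmu x) = 0.
  have -> : RI mu (fun x => g x * Dmu x) = RI mu (fun x => a * Dmu x - f x * Dmu x).
    by apply: RI_ext => x; rewrite /g mulrBl.
  rewrite RI_B; [|exact: bmM (bm_cst _) bm_Dmu|exact: bmM bf bm_Dmu].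
  by rewrite RI_Z; [rewrite -/Zm -/Ff /a divfK ?gt_eqF // subrr|exact: bm_Dmu].
have K2 : RI pi (fun x => g x * Dpi x) = Zp * (a - b).
  have -> : RI pi (fun x => g x * Dpi x) = RI pi (fun x => a * Dpi x - f x * Dpi x).
    by apply: RI_ext => x; rewrite /g mulrBl.
  rewrite RI_B; [|exact: bmM (bm_cst _) bm_Dpi|exact: bmM bf bm_Dpi].
  rewrite RI_Z; last exact: bm_Dpi.
  by rewrite -/Zp -/Fp /b mulrBr [Zp * (Fp / Zp)]mulrC divfK ?gt_eqF // mulrC.
have D1 : RI pi (fun x => g x * Dpi x) =
    RI pi (fun x => g x * G x) + RI pi (fun x => g x * (Dpi x - G x)).
  rewrite -RI_D //; apply: RI_ext => x; ring.
have D2 : RI mu (fun x => g x * Dmu x) =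
    RI mu (fun x => g x * G x) + RI mu (fun x => g x * (Dpi x - G x))
    - RI mu (fun x => g x * (Dpi x - Dmu x)).
  rewrite -RI_D // -RI_B //; last exact: bmD bgG bk.
  apply: RI_ext => x; ring.
set e := eps1 / rho.
have he : eps1 = rho * e by rewrite /e mulrC divfK // gt_eqF.
have rho2 : 0 <= rho / 2 by rewrite divr_ge0 // ltW.
have L1 : lip1 d (fun x => - (rho / 2) * (g x * G x)).
  move=> x y; rewrite -mulrBr normrM normrN (ger0_norm rho2).
  have e1 : `|g x * G x - g y * G y| <= d x y / rho + d x y.
    have -> : g x * G x - g y * G y = g x * (G x - G y) + G y * (g x - g y) by ring.
    apply: le_trans (ler_normD _ _) _; apply: lerD; rewrite normrM.
    - rewrite -[X in _ <= X]mul1r; apply: ler_pM => //; try exact: g1.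
      exact: supf_lipn.
    - rewrite -[X in _ <= X]mul1r; apply: ler_pM => //.
        rewrite ger0_norm; first exact: supf_le1.
        exact: supf_ge0.
      by rewrite /g opprB addrC addrA subrK (dsym x y); exact: hf.
  apply: le_trans (ler_wpM2l rho2 e1) _.
  have -> : rho / 2 * (d x y / rho + d x y) = d x y / 2 + rho * d x y / 2.
    by field; rewrite gt_eqF.
  have h := d0 x y; have h2 : rho * d x y <= d x y by rewrite ler_piMl.
  lra.
have W1 := Wb _ L1.
rewrite !RI_Z // in W1.
have T1b : RI pi (fun x => g x * G x) - RI mu (fun x => g x * G x) <= 2 * e.
  move: W1; rewrite he; set X := RI pi _; set Y := RI mu _ => W1.
  have : rho * (X - Y) <= rho * (2 * e) by nra.
  by rewrite ler_pM2l.
have L2 : lip1 d (fun x => rho * S x).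
  move=> x y; rewrite -mulrBr normrM (gtr0_norm hrho0).
  rewrite -ler_pdivlMl // mulrC; exact: supf_lipn.
have W2 := Wb _ L2.
rewrite !RI_Z // in W2.
have T2S : RI mu S - RI pi S <= e.
  move: W2; rewrite he => W2.
  have : rho * (RI mu S - RI pi S) <= rho * e by nra.
  by rewrite ler_pM2l.
have kS x : `|g x * (Dpi x - G x)| <= S x.
  have [Ax|nAx] := pselect (A x).
    rewrite S_A // normrM -[1]mul1r; apply: ler_pM => //; try exact: g1.
    by rewrite distrC ger0_norm; have /andP[] := G01 x.
  by rewrite G_off // subrr mulr0 normr0; exact: S_ge0.
have k1 : RI pi (fun x => g x * (Dpi x - G x)) <= RI pi S.
  by apply: RI_le => // x; apply: le_trans (ler_norm _) (kS x).
have k2 : RI mu (fun x => -1 * S x) <= RI mu (fun x => g x * (Dpi x - G x)).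
  apply: RI_le => //; first exact: bmM (bm_cst _) bS.
  by move=> x; rewrite mulN1r lerNl; apply: le_trans (kS x); rewrite -normrN; exact: ler_norm.
rewrite RI_Z // in k2.
have SP : RI pi S <= P.
  by rewrite -RI_Ab; apply: RI_le => //; [exact: bm_Ab|exact: S_Ab].
have T3b : RI mu (fun x => g x * (Dpi x - Dmu x)) <= eps2.
  rewrite -[X in _ <= X](RI_cst mu); apply: RI_le => //; first exact: bm_cst.
  move=> x; apply: le_trans (ler_norm _) _; rewrite normrM -[eps2]mul1r.
  by apply: ler_pM => //; try exact: g1; exact: hsup.
have main : Zp * (a - b) <= 3 * e + eps2 + 2 * P.
  rewrite -K2 D1 -(subr0 (RI pi _ + _)) -K1 D2; lra.
rewrite /e mulrA in main.
rewrite mulrC ler_pdivlMr //.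
have hN : 0 <= 3 * eps1 / rho + eps2 + 2 * P.
  rewrite -mulrA.
  have := eps1_ge0; have := eps2_ge0; have := P_ge0.
  have : 0 <= eps1 / rho by rewrite divr_ge0 // ?eps1_ge0 // ltW.
  lra.
have [ab|ab] := leP 0 (a - b).
  apply: le_trans _ main; rewrite [Zp * _]mulrC; exact: ler_wpM2l.
apply: le_trans _ hN; rewrite pmulr_lle0 //; exact: ltW.
Qed.
End Fix.

Lemma pos_Zm : delta^-1 * (3 * eps1 / rho + eps2 + 2 * P) < 1 -> 0 < RI mu Dmu.
Proof.
move=> hlt.
have hN : 3 * eps1 / rho + eps2 + 2 * P < delta.
  by move: hlt; rewrite mulrC ltr_pdivrMr // mul1r.
have bG := G_bm; have bS := S_bm.
set e := eps1 / rho.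
have he : eps1 = rho * e by rewrite /e mulrC divfK // gt_eqF.
have e0 : 0 <= e by rewrite /e divr_ge0 // ?eps1_ge0 // ltW.
have L2 : lip1 d (fun x => rho * S x).
  move=> x y; rewrite -mulrBr normrM (gtr0_norm hrho0).
  rewrite -ler_pdivlMl // mulrC; exact: supf_lipn.
have W2 := Wb _ L2.
rewrite !RI_Z // in W2.
have T2S : RI mu S - RI pi S <= e.
  move: W2; rewrite he => W2.
  have : rho * (RI mu S - RI pi S) <= rho * e by nra.
  by rewrite ler_pM2l.
have L3 : lip1 d (fun x => - rho * G x).
  move=> x y; rewrite -mulrBr normrM normrN (gtr0_norm hrho0).
  rewrite -ler_pdivlMl // mulrC; exact: supf_lipn.
have W3 := Wb _ L3.
rewrite !RI_Z // in W3.
have T3G : RI pi G - RI mu G <= e.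
  move: W3; rewrite he => W3.
  have : rho * (RI pi G - RI mu G) <= rho * e by nra.
  by rewrite ler_pM2l.
have SP : RI pi S <= P.
  by rewrite -RI_Ab; apply: RI_le => //; [exact: bm_Ab|exact: S_Ab].
have GZ : RI pi Dpi <= RI pi G.
  apply: RI_le => //; [exact: bm_Dpi|]; move=> x; exact: supf_ge.
have hZp : delta <= RI pi Dpi by rewrite -lee_fin -(RI_E pi Dpi bm_Dpi).
have DG : RI mu (fun x => G x - S x) <= RI mu Dpi.
  apply: RI_le => //; [exact: bmB bG bS|exact: bm_Dpi|].
  move=> x; rewrite lerBlDr; have [Ax|nAx] := pselect (A x).
    rewrite S_A //; have /andP[_ +] := G01 x; lra.
  by rewrite G_off // lerDl; exact: S_ge0.
rewrite RI_B // in DG.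
have DD : RI mu (fun x => Dpi x - eps2) <= RI mu Dmu.
  apply: RI_le => //; [exact: bmB bm_Dpi (bm_cst _)|exact: bm_Dmu|].
  move=> x; have := hsup x; rewrite ler_norml => /andP[_ h]; lra.
rewrite RI_B ?RI_cst // in DD; [|exact: bm_Dpi|exact: bm_cst].
have := P_ge0; have := eps2_ge0.
have E3 : 3 * eps1 / rho = 3 * e by rewrite /e mulrA.
rewrite E3 in hN.
lra.
Qed.
End Main.
Theorem lemma5p3 (R : realType) (dsp : measure_display) (T : measurableType dsp)
  (d : T -> T -> R)
  (hpolish : polish_metric d)
  (hborel : @measurable _ T = <<s metric_open d >>)
  (hdiam : diameter_one d)
  (mu pi : probability T R)
  (Dmu Dpi : T -> R)
  (hDmu01 : forall x, 0 <= Dmu x <= 1) (hDpi01 : forall x, 0 <= Dpi x <= 1)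
  (hDmu_meas : measurable_fun setT Dmu) (hDpi_meas : measurable_fun setT Dpi)
  (delta eps1 eps2 : R) (hdelta : 0 < delta)
  (hint : (delta%:E <= \int[pi]_x (Dpi x)%:E)%E)
  (hW : (wass d mu pi <= eps1%:E)%E)
  (hsup : forall x, `|Dpi x - Dmu x| <= eps2)
  (rho : R) (hrho0 : 0 < rho) (hrho1 : rho <= 1) :
  let rhs := ((delta^-1)%:E * ((3 * eps1 / rho + eps2)%:E
                + 2%:E * pi (Abar_rho d Dpi rho)))%E in
  ((0 < \int[mu]_x (Dmu x)%:E)%E ->
     (wass d (reweight mu Dmu) (reweight pi Dpi) <= rhs)%E)
  /\ ((rhs < 1%:E)%E -> (0 < \int[mu]_x (Dmu x)%:E)%E).

Proof.
move=> rhs.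
have [hmet _ _] := hpolish.
have [hd1 hdex] := hdiam.
have [x0 _] := hdex 1 ltr01.
have bDmu : bm Dmu.
  by split => //; exists 1 => x; have /andP[? ?] := hDmu01 x; rewrite ger0_norm.
have bDpi : bm Dpi.
  by split => //; exists 1 => x; have /andP[? ?] := hDpi01 x; rewrite ger0_norm.
have rhsE : rhs = (delta^-1 * (3 * eps1 / rho + eps2 + 2 * P d pi Dpi rho))%:E.
  by rewrite /rhs (piAb d hmet hborel) EFinM !EFinD EFinM.
split.
  move=> hZ.
  have hZm : 0 < RI mu Dmu by rewrite -lte_fin -(RI_E mu Dmu bDmu).
  apply: ge_ereal_sup => _ [f hf <-].
  have bf : bm f := @lip1_bm _ _ _ d hborel hd1 x0 f hf.
  have [mf [M hM]] := bf.
  rewrite (integral_reweight mu Dmu hDmu01 hDmu_meas f M mf hM).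
  rewrite (integral_reweight pi Dpi hDpi01 hDpi_meas f M mf hM).
  rewrite (RI_E mu _ (bmM bf (bmM (bm_cst _) bDmu))).
  rewrite (RI_E pi _ (bmM bf (bmM (bm_cst _) bDpi))).
  rewrite rhsE -EFinB lee_fin.
  have cE1 : (cc mu Dmu hDmu01)%:num = (RI mu Dmu)^-1 by [].
  have cE2 : (cc pi Dpi hDpi01)%:num = (RI pi Dpi)^-1 by [].
  have E1 : RI mu (fun x => f x * ((cc mu Dmu hDmu01)%:num * Dmu x)) =
      RI mu (fun x => f x * Dmu x) / RI mu Dmu.
    rewrite (@RI_ext _ _ _ mu _ (fun x => (cc mu Dmu hDmu01)%:num * (f x * Dmu x))).
      by rewrite RI_Z ?cE1 ?[_^-1 * _]mulrC //; exact: bmM bf bDmu.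
    by move=> x; rewrite mulrCA.
  have E2 : RI pi (fun x => f x * ((cc pi Dpi hDpi01)%:num * Dpi x)) =
      RI pi (fun x => f x * Dpi x) / RI pi Dpi.
    rewrite (@RI_ext _ _ _ pi _ (fun x => (cc pi Dpi hDpi01)%:num * (f x * Dpi x))).
      by rewrite RI_Z ?cE2 ?[_^-1 * _]mulrC //; exact: bmM bf bDpi.
    by move=> x; rewrite mulrCA.
  rewrite E1 E2.
  exact: (@main_real R dsp T d hmet hborel hd1 x0 mu pi Dmu Dpi hDmu01 hDpi01
    hDmu_meas hDpi_meas delta eps1 eps2 hdelta hint hW hsup rho hrho0 hrho1 f hf hZm).
move=> hlt.
rewrite (RI_E mu Dmu bDmu) lte_fin.
apply: (@pos_Zm R dsp T d hmet hborel hd1 x0 mu pi Dmu Dpi hDmu01 hDpi01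
    hDmu_meas hDpi_meas delta eps1 eps2 hdelta hint hW hsup rho hrho0).
by rewrite rhsE lte_fin in hlt.
Qed.
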